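(* If $\mathcal A\subseteq\binom{[n]}{k}$ is $t$-intersecting, then for every $1\le i<j\le n$, ${\rm co}_2(\Delta_{ij}(\mathcal A))\ge{\rm co}_2(\mathcal A)$. In particular, there exists a left-compressed $t$-intersecting family $\mathcal B\subseteq\binom{[n]}{k}$ such that ${\rm co}_2(\mathcal B)\ge{\rm co}_2(\mathcal A)$.
   Context: A family is $t$-intersecting if any two members share at least $t$ elements. $d(E)=|\{F\in\mathcal F:E\subseteq F\}|$, ${\rm co}_2(\mathcal F)=\sum_{E\in\binom{[n]}{k-1}}d(E)^2$. Shift: for $A\in\mathcal A$, $\delta_{ij}(A)=(A\setminus\{j\})\cup\{i\}$ if $j\in A$, $i\notin A$ and $(A\setminus\{j\})\cup\{i\}\notin\mathcal A$; otherwise $\delta_{ij}(A)=A$; $\Delta_{ij}(\mathcal A)=\{\delta_{ij}(A):A\in\mathcal A\}$. A family $\mathcal B$ is left-compressed if $\Delta_{ij}(\mathcal B)=\mathcal B$ for all $1\le i<j\le n$. *)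

(* Defs.v *)
From mathcomp Require Import all_boot.
Set Implicit Arguments. Unset Strict Implicit. Unset Printing Implicit Defensive.

(* Ground set [n] is modelled by 'I_n (elements 0..n-1); order on 'I_n is the
   order of the natural numbers, so "i < j" has the same meaning. *)

Definition uniform (n k : nat) (A : {set {set 'I_n}}) : Prop :=
  forall F, F \in A -> #|F| = k.

Definition t_intersecting (n t : nat) (A : {set {set 'I_n}}) : Prop :=
  forall F G, F \in A -> G \in A -> t <= #|F :&: G|.

Definition deg (n : nat) (A : {set {set 'I_n}}) (E : {set 'I_n}) : nat :=
  #|[set F in A | E \subset F]|.

Definition co2 (n k : nat) (A : {set {set 'I_n}}) : nat :=
  \sum_(E : {set 'I_n} | #|E| == k.-1) deg A E ^ 2.

Definition delta (n : nat) (i j : 'I_n) (A : {set {set 'I_n}}) (F : {set 'I_n})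
  : {set 'I_n} :=
  if [&& j \in F, i \notin F & (i |: (F :\ j)) \notin A]
  then i |: (F :\ j) else F.

Definition Delta (n : nat) (i j : 'I_n) (A : {set {set 'I_n}}) : {set {set 'I_n}} :=
  [set delta i j A F | F in A].

Definition left_compressed (n : nat) (B : {set {set 'I_n}}) : Prop :=
  forall i j : 'I_n, i < j -> Delta i j B = B.

(* Main.v *)
Require Import Defs.
From mathcomp Require Import all_boot zify.
Set Implicit Arguments. Unset Strict Implicit. Unset Printing Implicit Defensive.

Definition tsw n (i j x : 'I_n) : 'I_n := if x == i then j else if x == j then i else x.
Definition sw n (i j : 'I_n) (F : {set 'I_n}) := [set x | tsw i j x \in F].

Lemma tswK n (i j : 'I_n) : involutive (tsw i j).
Proof.
move=> x; rewrite /tsw.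
case: (eqVneq x i) => [->|xi]; first by case: (eqVneq j i) => [->|]; rewrite ?eqxx.
case: (eqVneq x j) => [->|xj]; first by rewrite eqxx.
by rewrite (negbTE xi) (negbTE xj).
Qed.

Lemma swK n (i j : 'I_n) : involutive (sw i j).
Proof. by move=> F; apply/setP => x; rewrite !inE tswK. Qed.

Lemma sw_inj n (i j : 'I_n) : injective (sw i j).
Proof. exact: inv_inj (swK i j). Qed.

Lemma card_sw n (i j : 'I_n) (F : {set 'I_n}) : #|sw i j F| = #|F|.
Proof. rewrite /sw -[RHS](card_preimset _ (inv_inj (tswK i j))).
by apply: eq_card => x; rewrite !inE. Qed.

Lemma swI n (i j : 'I_n) (F G : {set 'I_n}) : sw i j (F :&: G) = sw i j F :&: sw i j G.
Proof. by apply/setP => x; rewrite !inE. Qed.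

Lemma sw_sub n (i j : 'I_n) (E F : {set 'I_n}) : (E \subset sw i j F) = (sw i j E \subset F).
Proof.
apply/subsetP/subsetP => h x.
  by rewrite inE => /h; rewrite inE tswK.
by move=> xE; rewrite inE; apply: h; rewrite inE tswK.
Qed.

Lemma in_sw n (i j : 'I_n) (F : {set 'I_n}) x : (x \in sw i j F) = (tsw i j x \in F).
Proof. by rewrite inE. Qed.

Lemma tswL n (i j : 'I_n) : tsw i j i = j. Proof. by rewrite /tsw eqxx. Qed.
Lemma tswR n (i j : 'I_n) : tsw i j j = i.
Proof. by rewrite /tsw; case: eqVneq => [->|]; rewrite ?eqxx. Qed.
Lemma tswD n (i j x : 'I_n) : x != i -> x != j -> tsw i j x = x.
Proof. by rewrite /tsw => /negbTE -> /negbTE ->. Qed.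

Lemma sw_fix n (i j : 'I_n) (F : {set 'I_n}) : (i \in F) = (j \in F) -> sw i j F = F.
Proof.
move=> h; apply/setP => x; rewrite inE.
case: (eqVneq x i) => [->|xi]; first by rewrite tswL h.
case: (eqVneq x j) => [->|xj]; first by rewrite tswR h.
by rewrite tswD.
Qed.

Lemma sw_shift n (i j : 'I_n) (F : {set 'I_n}) : i != j -> j \in F -> i \notin F ->
  i |: (F :\ j) = sw i j F.
Proof.
move=> ij jF iF; apply/setP => x; rewrite !inE.
case: (eqVneq x i) => [->|xi]; first by rewrite tswL jF.
case: (eqVneq x j) => [->|xj] /=; first by rewrite tswR (negbTE iF).
by rewrite tswD.
Qed.

Lemma deltaE n (i j : 'I_n) X (F : {set 'I_n}) : i != j ->
  delta i j X F = if [&& j \in F, i \notin F & sw i j F \notin X] then sw i j F else F.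
Proof.
move=> ij; rewrite /delta; case jF: (j \in F) => //; case iF: (i \in F) => //=.
by rewrite sw_shift ?iF.
Qed.

Lemma memDelta n (i j : 'I_n) X (F : {set 'I_n}) : i != j ->
  (F \in Delta i j X) = if (i \in F) == (j \in F) then F \in X
     else if i \in F then (F \in X) || (sw i j F \in X)
     else (F \in X) && (sw i j F \in X).
Proof.
move=> ij; apply/imsetP/idP.
  case=> G GX ->; rewrite deltaE //.
  case jG: (j \in G); case iG: (i \in G) => /=; rewrite ?GX ?jG ?iG //=.
  case sX: (sw i j G \in X) => /=; rewrite ?in_sw ?tswL ?tswR ?iG ?jG ?swK ?GX ?sX //=.
case iF: (i \in F); case jF: (j \in F) => //=.
- by move=> FX; exists F => //; rewrite deltaE // iF jF.
- case: (boolP (F \in X)) => /= [FX _|FX sFX]; first by exists F => //; rewrite deltaE // jF.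
  exists (sw i j F) => //; rewrite deltaE // !in_sw tswL tswR iF jF swK.
  by rewrite FX.
- by case/andP=> FX sFX; exists F => //; rewrite deltaE // jF iF /= sFX.
- by move=> FX; exists F => //; rewrite deltaE // iF jF.
Qed.

Lemma degE n (X : {set {set 'I_n}}) (E : {set 'I_n}) :
  deg X E = \sum_(F : {set 'I_n}) ((F \in X) && (E \subset F)).
Proof.
rewrite /deg -sum1_card big_mkcond /=; apply: eq_bigr => F _.
by rewrite inE; case: (_ && _).
Qed.

Lemma degswE n (i j : 'I_n) (X : {set {set 'I_n}}) (E : {set 'I_n}) :
  deg X (sw i j E) = \sum_(F : {set 'I_n}) ((sw i j F \in X) && (E \subset F)).
Proof.
by rewrite degE (reindex_inj (@sw_inj n i j)); apply: eq_bigr => F _; rewrite sw_sub swK.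
Qed.

Lemma ptQ n (i j : 'I_n) (X : {set {set 'I_n}}) (F : {set 'I_n}) : i != j ->
  (F \in Delta i j X) + (sw i j F \in Delta i j X) = (F \in X) + (sw i j F \in X).
Proof.
move=> ij; rewrite !memDelta // !in_sw tswL tswR swK.
by case: (i \in F); case: (j \in F); case: (F \in X); case: (sw i j F \in X).
Qed.

Lemma ptR n (i j : 'I_n) (X : {set {set 'I_n}}) (F : {set 'I_n}) : i != j -> i \in F ->
  ((F \in X) <= (F \in Delta i j X)) && ((sw i j F \in X) <= (F \in Delta i j X)).
Proof.
move=> ij iF; rewrite memDelta // iF.
case jF: (j \in F) => /=.
  by rewrite sw_fix ?iF ?jF // leqnn.
by case: (F \in X); case: (sw i j F \in X).
Qed.

Lemma degQ n (i j : 'I_n) (X : {set {set 'I_n}}) (E : {set 'I_n}) : i != j ->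
  deg (Delta i j X) E + deg (Delta i j X) (sw i j E) = deg X E + deg X (sw i j E).
Proof.
move=> ij; rewrite degE degswE degE degswE -!big_split /=.
apply: eq_bigr => F _; have := ptQ X F ij.
by case: (E \subset F); rewrite ?andbT ?andbF.
Qed.

Lemma degR n (i j : 'I_n) (X : {set {set 'I_n}}) (E : {set 'I_n}) : i != j -> i \in E ->
  (deg X E <= deg (Delta i j X) E) && (deg X (sw i j E) <= deg (Delta i j X) E).
Proof.
move=> ij iE; rewrite degE degswE degE; apply/andP; split; apply: leq_sum => F _;
case EF: (E \subset F); rewrite ?andbT ?andbF //;
have /andP[h1 h2] := ptR X ij (subsetP EF _ iE); by [].
Qed.

Lemma sq_ineq (p q a b : nat) : p + q = a + b -> a <= p -> b <= p ->
  a ^ 2 + b ^ 2 <= p ^ 2 + q ^ 2.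
Proof. move=> *; nia. Qed.

Lemma degsq n (i j : 'I_n) (X : {set {set 'I_n}}) (E : {set 'I_n}) : i != j ->
  deg X E ^ 2 + deg X (sw i j E) ^ 2 <=
  deg (Delta i j X) E ^ 2 + deg (Delta i j X) (sw i j E) ^ 2.
Proof.
move=> ij.
have key : forall E0 : {set 'I_n}, i \in E0 ->
  deg X E0 ^ 2 + deg X (sw i j E0) ^ 2 <=
  deg (Delta i j X) E0 ^ 2 + deg (Delta i j X) (sw i j E0) ^ 2.
  move=> E0 iE0; have /andP[h1 h2] := degR X ij iE0.
  exact: sq_ineq (degQ X E0 ij) h1 h2.
case iE: (i \in E); first exact: key.
case jE: (j \in E).
  have := key (sw i j E); rewrite in_sw tswL jE swK => /(_ isT).
  by rewrite addnC [X in _ <= X]addnC.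
have sE : sw i j E = E by apply: sw_fix; rewrite iE jE.
have := degQ X E ij; rewrite sE => h.
have -> : deg (Delta i j X) E = deg X E by lia.
by [].
Qed.

Lemma co2_Delta n k (i j : 'I_n) (X : {set {set 'I_n}}) : i != j -> co2 k X <= co2 k (Delta i j X).
Proof.
move=> ij.
have dbl : forall Y : {set {set 'I_n}}, 2 * co2 k Y =
   \sum_(E : {set 'I_n} | #|E| == k.-1) (deg Y E ^ 2 + deg Y (sw i j E) ^ 2).
  move=> Y; rewrite big_split /= mul2n -addnn /co2; congr (_ + _).
  rewrite (reindex_inj (@sw_inj n i j)) /=.
  by apply: eq_bigl => E; rewrite card_sw.
rewrite -(@leq_pmul2l 2) // !dbl.
by apply: leq_sum => E _; apply: degsq.
Qed.

Lemma uniform_Delta n k (i j : 'I_n) (X : {set {set 'I_n}}) : i != j ->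
  uniform k X -> uniform k (Delta i j X).
Proof.
move=> ij uX F /imsetP[G GX ->]; rewrite deltaE //.
by case: ifP; rewrite ?card_sw uX.
Qed.

Lemma tint_one n t (i j : 'I_n) (X : {set {set 'I_n}}) (F G : {set 'I_n}) :
  i != j -> t_intersecting t X -> F \in X -> G \in X ->
  j \in F -> i \notin F ->
  ~~ [&& j \in G, i \notin G & sw i j G \notin X] ->
  t <= #|sw i j F :&: G|.
Proof.
move=> ij tX FX GX jF iF hG.
case jG: (j \in G).
  have sGX : sw i j G \in X.
    case iG: (i \in G); first by rewrite sw_fix ?iG ?jG.
    by move: hG; rewrite jG iG /= negbK.
  rewrite -(card_sw i j) swI !swK; exact: tX.
apply: leq_trans (tX _ _ FX GX) _; apply: subset_leq_card; apply/subsetP => x.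
rewrite !inE => /andP[xF xG]; rewrite xG andbT.
have xj : x != j by apply: contraFneq jG => <-.
have xi : x != i by apply: contraNneq iF => <-.
by rewrite tswD.
Qed.

Lemma tint_Delta n t (i j : 'I_n) (X : {set {set 'I_n}}) : i != j ->
  t_intersecting t X -> t_intersecting t (Delta i j X).
Proof.
move=> ij tX F' G' /imsetP[F FX ->] /imsetP[G GX ->]; rewrite !deltaE //.
case: ifP => hF; case: ifP => hG.
- by rewrite -swI card_sw; apply: tX.
- case/and3P: hF => jF iF _; apply: (@tint_one n t i j X) => //; by rewrite hG.
- case/and3P: hG => jG iG _; rewrite setIC; apply: (@tint_one n t i j X) => //; by rewrite hF.
- exact: tX.
Qed.

Definition wt n (F : {set 'I_n}) := \sum_(x in F) (x : nat).
Definition W n (X : {set {set 'I_n}}) := \sum_(F in X) wt F.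

Lemma delta_inj n (i j : 'I_n) (X : {set {set 'I_n}}) : i != j ->
  {in X &, injective (delta i j X)}.
Proof.
move=> ij F G FX GX; rewrite !deltaE //.
case: ifP => hF; case: ifP => hG.
- exact: sw_inj.
- by move=> e; case/and3P: hF => _ _; rewrite e GX.
- by move=> e; case/and3P: hG => _ _; rewrite -e FX.
- by [].
Qed.

Lemma wt_delta n (i j : 'I_n) (X : {set {set 'I_n}}) F : i < j ->
  wt (delta i j X F) + (delta i j X F != F) <= wt F.
Proof.
move=> lt; rewrite /delta; case: ifP => [/and3P[jF iF _]|]; last by rewrite eqxx addn0.
have ij : i != j by apply: contraTneq lt => ->; rewrite ltnn.
rewrite /wt big_setU1 /=; last by rewrite !inE negb_and iF orbT.
rewrite [X in _ <= X](big_setD1 j) //=.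
have : i |: (F :\ j) != F by apply: contraNneq iF => <-; rewrite setU11.
move=> /negbTE ->; rewrite /= addn1 ltn_add2r. exact: lt.
Qed.

Lemma W_Delta n (i j : 'I_n) (X : {set {set 'I_n}}) : i < j ->
  Delta i j X != X -> W (Delta i j X) < W X.
Proof.
move=> lt ne.
have ij : i != j by apply: contraTneq lt => ->; rewrite ltnn.
have [F0 F0X dF0] : exists2 F0, F0 \in X & delta i j X F0 != F0.
  apply/exists_inP; apply: contraNT ne => /exists_inPn h.
  apply/eqP; rewrite /Delta (eq_in_imset (g := id)) ?imset_id // => F FX.
  by move: (h F FX); rewrite negbK => /eqP.
rewrite /W /Delta big_imset /=; last exact: delta_inj.
rewrite (bigD1 F0) //= [X in _ < X](bigD1 F0) //=.
have h0 := wt_delta X F0 lt; rewrite dF0 /= in h0.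
have h1 : \sum_(F in X | F != F0) wt (delta i j X F) <= \sum_(F in X | F != F0) wt F.
  apply: leq_sum => F _; have := wt_delta X F lt; lia.
apply: leq_trans (leq_add h0 h1); by rewrite addn1 addSn.
Qed.

Lemma exist_lc n k t : forall N (X : {set {set 'I_n}}), W X < N ->
  uniform k X -> t_intersecting t X ->
  exists B : {set {set 'I_n}},
      [/\ uniform k B, t_intersecting t B, left_compressed B & co2 k B >= co2 k X].
Proof.
elim=> [//|N IH] X WX uX tX.
case: (boolP [exists i : 'I_n, exists j : 'I_n, (i < j) && (Delta i j X != X)]).
  case/existsP=> i /existsP[j /andP[lt ne]].
  have ij : i != j by apply: contraTneq lt => ->; rewrite ltnn.
  have hW : W (Delta i j X) < N by have := W_Delta lt ne; lia.
  have [B [uB tB lB cB]] := IH (Delta i j X) hW (uniform_Delta ij uX) (tint_Delta ij tX).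
  exists B; split => //; apply: leq_trans cB; exact: co2_Delta.
move/existsPn => h; exists X; split => // i j lt.
by move: (h i) => /existsPn /(_ j); rewrite lt /= negbK => /eqP.
Qed.

Theorem corollary2p3 (n k t : nat) (A : {set {set 'I_n}}) :
  1 <= t -> uniform k A -> t_intersecting t A ->
  (forall i j : 'I_n, i < j -> co2 k (Delta i j A) >= co2 k A) /\
  (exists B : {set {set 'I_n}},
      [/\ uniform k B, t_intersecting t B, left_compressed B &
          co2 k B >= co2 k A]).
Proof.
move=> _ uA tA; split.
  move=> i j lt; apply: co2_Delta; by apply: contraTneq lt => ->; rewrite ltnn.
exact: (@exist_lc n k t (W A).+1).
Qed.
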